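(* Let $\Gamma$ be a distance-regular graph with diameter $D\ge3$ and $a_1\ne0$. Let $\sigma_0,\dots,\sigma_D$ and $\rho_0,\dots,\rho_D$ be nontrivial pseudo cosine sequences forming a tight pair, with auxiliary parameter $\varepsilon$. Then for each $i$ with $1\le i\le D-1$ the following are equivalent: (i) $\sigma_{i-1}=\varepsilon\sigma_i$; (ii) $\sigma_{i+1}=\varepsilon\sigma_i$; (iii) $\sigma_{i-1}=\sigma_{i+1}$; (iv) $\rho_i=0$.
   Context: $\Gamma$ is a finite connected undirected graph without loops or multiple edges, distance-regular with diameter $D$, intersection numbers $a_i,b_i,c_i$ ($c_0=0$, $b_D=0$), valency $k$, $c_i+a_i+b_i=k$. For $\theta\in\mathbb{R}$ the pseudo cosine sequence for $\theta$ is the sequence of reals $\sigma_0,\dots,\sigma_D$ with $\sigma_0=1$ and $c_i\sigma_{i-1}+a_i\sigma_i+b_i\sigma_{i+1}=\theta\sigma_i$ for $0\le i\le D-1$; nontrivial means $\sigma_1\ne1$. Pseudo cosine sequences $\sigma_i$, $\rho_i$ form a tight pair if $(\sigma_i\rho_i)_{i=0}^D$ is a pseudo cosine sequence. For a tight pair of nontrivial pseudo cosine sequences, an auxiliary parameter is a real $\varepsilon$ with $\sigma_i\rho_i-\sigma_{i-1}\rho_{i-1}=\varepsilon(\sigma_{i-1}\rho_i-\sigma_i\rho_{i-1})$ for $1\le i\le D$. *)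

(* Defs.v *)
From mathcomp Require Import all_boot all_order all_algebra.
Set Implicit Arguments. Unset Strict Implicit. Unset Printing Implicit Defensive.
Import Order.TTheory GRing.Theory Num.Theory.

Section Graph.
Variables (T : finType) (e : rel T).

Fixpoint ball (x : T) (n : nat) : {set T} :=
  if n is n'.+1 then ball x n' :|: [set z | [exists w in ball x n', e w z]]
  else [set x].

(* path-length distance: least n with y in ball x n (searched among
   0..#|T|-1, which suffices in a connected graph) *)
Definition dist (x y : T) : nat :=
  find (fun n => y \in ball x n) (iota 0 #|T|).

Definition is_drg (D : nat) (a b c : nat -> nat) : Prop :=
  [/\ symmetric e, irreflexive e, (forall x y, connect e x y),
      ((forall x y, dist x y <= D)%N /\ exists x y, dist x y = D) &
      forall x y,
        [/\ #|[set z | e y z & (dist x z).+1 == dist x y]| = c (dist x y),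
            #|[set z | e y z & dist x z == dist x y]| = a (dist x y) &
            #|[set z | e y z & dist x z == (dist x y).+1]| = b (dist x y)]].
End Graph.

Local Open Scope ring_scope.

(* pseudo cosine sequence for theta (indices 0..D; sigma (i.-1) at i = 0
   is multiplied by c_0 = 0) *)
Definition pseudo_cosine (R : realFieldType) (D : nat) (a b c : nat -> nat)
  (theta : R) (sigma : nat -> R) : Prop :=
  sigma 0%N = 1 /\
  forall i : nat, (i < D)%N ->
    (c i)%:R * sigma i.-1 + (a i)%:R * sigma i + (b i)%:R * sigma i.+1
      = theta * sigma i.

Definition is_pseudo_cosine (R : realFieldType) (D : nat) (a b c : nat -> nat)
  (sigma : nat -> R) : Prop :=
  exists theta : R, pseudo_cosine D a b c theta sigma.

Definition nontrivial_pcs (R : realFieldType) (D : nat) (a b c : nat -> nat)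
  (sigma : nat -> R) : Prop :=
  is_pseudo_cosine D a b c sigma /\ sigma 1%N != 1.

Definition tight_pair (R : realFieldType) (D : nat) (a b c : nat -> nat)
  (sigma rho : nat -> R) : Prop :=
  is_pseudo_cosine D a b c sigma /\ is_pseudo_cosine D a b c rho /\
  is_pseudo_cosine D a b c (fun i => sigma i * rho i).

Definition auxiliary_parameter (R : realFieldType) (D : nat)
  (sigma rho : nat -> R) (eps : R) : Prop :=
  forall i : nat, (1 <= i <= D)%N ->
    sigma i * rho i - sigma i.-1 * rho i.-1
      = eps * (sigma i.-1 * rho i - sigma i * rho i.-1).

(* Main.v *)
Require Import Defs.
From mathcomp Require Import all_boot all_order all_algebra.
From mathcomp Require Import zify ring lra.
Set Implicit Arguments. Unset Strict Implicit. Unset Printing Implicit Defensive.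
Import Order.TTheory GRing.Theory Num.Theory.

Section G.
Variables (T : finType) (e : rel T).
Hypothesis esym : symmetric e.

Lemma ballS x n : ball e x n.+1 = ball e x n :|: [set z | [exists w in ball e x n, e w z]].
Proof. by []. Qed.

Lemma ball_sub x n m : (n <= m)%N -> ball e x n \subset ball e x m.
Proof.
elim: m => [|m IH]; first by rewrite leqn0 => /eqP->.
rewrite leq_eqVlt => /orP[/eqP->//|/IH H].
by apply: subset_trans H _; rewrite ballS subsetUl.
Qed.

Lemma ball_step x n y z : y \in ball e x n -> e y z -> z \in ball e x n.+1.
Proof.
move=> Hy Hyz; rewrite ballS !inE; apply/orP; right; apply/existsP; exists y.
by rewrite Hy.
Qed.

Lemma ball_trans x y v n m : y \in ball e x n -> v \in ball e y m -> v \in ball e x (n + m).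
Proof.
elim: m v => [|m IH] v Hy.
  by rewrite /= inE => /eqP->; rewrite addn0.
rewrite ballS inE => /orP[H|].
  rewrite addnS; apply: (subsetP (ball_sub x (leqnSn (n + m)))); exact: IH.
rewrite inE => /existsP[w /andP[Hw Hwv]]; rewrite addnS.
exact: ball_step (IH _ Hy Hw) Hwv.
Qed.

Lemma dist_le x y n : y \in ball e x n -> (dist e x y <= n)%N.
Proof.
move=> H; rewrite /dist; case: (ltnP n #|T|) => Hn.
  rewrite leqNgt; apply/negP => Hlt.
  have := before_find 0%N Hlt.
  by rewrite nth_iota // add0n H.
by apply: leq_trans (find_size _ _) _; rewrite size_iota.
Qed.

Lemma path_ball x p : path e x p -> last x p \in ball e x (size p).
Proof.
elim/last_ind: p => [|p z IH]; first by rewrite /= inE.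
rewrite rcons_path last_rcons size_rcons => /andP[/IH H Hz].
exact: ball_step H Hz.
Qed.

Hypothesis econn : forall x y, connect e x y.

Lemma dist_lt x y : (dist e x y < #|T|)%N.
Proof.
have /connectP[p Hp Hy] := econn x y.
case/shortenP: Hp Hy => p' Hp' Hu _ Hy.
have := path_ball Hp'; rewrite -Hy => /dist_le H.
apply: leq_ltn_trans H _.
have := max_card (mem (x :: p')).
by rewrite (card_uniqP Hu).
Qed.

Lemma dist_ball x y : y \in ball e x (dist e x y).
Proof.
have Hl := dist_lt x y.
have Hh : has (fun n => y \in ball e x n) (iota 0 #|T|).
  by rewrite has_find size_iota.
have := nth_find 0%N Hh.
by rewrite nth_iota ?add0n.
Qed.

Lemma dist_tri x y z : (dist e x z <= dist e x y + dist e y z)%N.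
Proof. exact: dist_le (ball_trans (dist_ball x y) (dist_ball y z)). Qed.

Lemma dist_adj x y z : e y z -> (dist e x z <= (dist e x y).+1)%N.
Proof. move=> H; exact: dist_le (ball_step (dist_ball x y) H). Qed.

Lemma dist_xx x : dist e x x = 0%N.
Proof. by apply/eqP; rewrite -leqn0; apply: dist_le; rewrite /= inE. Qed.

Lemma dist0 x y : dist e x y = 0%N -> y = x.
Proof. by move=> H; have := dist_ball x y; rewrite H /= inE => /eqP. Qed.

Lemma dist_down x y d : dist e x y = d.+1 -> exists w, e y w /\ dist e x w = d.
Proof.
move=> H; have := dist_ball x y; rewrite H ballS inE => /orP[/dist_le|].
  by rewrite H ltnn.
rewrite inE => /existsP[w /andP[Hw Hwy]].
exists w; split; first by rewrite esym.
apply/eqP; rewrite eqn_leq (dist_le Hw) /=.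
by have := dist_adj x Hwy; rewrite H ltnS.
Qed.

Lemma geo x y n j : dist e x y = (n + j)%N -> exists w, dist e x w = n /\ y \in ball e w j.
Proof.
elim: j y => [|j IH] y H.
  by exists y; split; [rewrite addn0 in H | rewrite /= inE].
rewrite addnS in H; case: (dist_down H) => u [Hyu Hu].
case: (IH u Hu) => w [Hw Hu'].
exists w; split => //; apply: ball_step Hu' _; by rewrite esym.
Qed.

End G.

Lemma card_split (T: finType) (p q : pred T) :
  #|[set z | p z]| = (#|[set z | p z && q z]| + #|[set z | p z && ~~ q z]|)%N.
Proof.
rewrite -(cardID q [set z | p z]).
by congr (_ + _)%N; apply: eq_card => z; rewrite !inE /= 1?andbC.
Qed.

Lemma drg_facts (T : finType) (e : rel T) D a b c : is_drg e D a b c ->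
  [/\ c 0%N = 0%N, a 0%N = 0%N,
      forall d, (d <= D)%N -> (c d + a d + b d)%N = b 0%N,
      forall d, (0 < d <= D)%N -> (0 < c d)%N &
      forall d, (d < D)%N -> (0 < b d)%N].
Proof.
case=> esym eirr econn [Hle [x0 [y0 HD]]] H.
have Hreal : forall d, (d <= D)%N -> exists x y, dist e x y = d.
  move=> d Hd; have : dist e x0 y0 = (d + (D - d))%N by rewrite HD subnKC.
  by case/(geo esym econn) => w [Hw _]; exists x0, w.
have Hdeg : forall y, b 0%N = #|[set z | e y z]|.
  move=> y; have := H y y; rewrite !(dist_xx e); case=> _ _ <-.
  apply: eq_card => z; rewrite !inE; case Eyz: (e y z) => //=.
  have h1 := dist_adj econn y Eyz; rewrite (dist_xx e) in h1.
  have h2 : dist e y z != 0%N.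
    by apply/eqP => /(dist0 econn) Ez; rewrite Ez eirr in Eyz.
  apply/eqP; lia.
split.
- have := H x0 x0; rewrite !(dist_xx e); case=> <- _ _.
  apply/eqP; rewrite cards_eq0; apply/eqP/setP => z; rewrite !inE /=.
  by rewrite andbF.
- have := H x0 x0; rewrite !(dist_xx e); case=> _ <- _.
  apply/eqP; rewrite cards_eq0; apply/eqP/setP => z; rewrite !inE /=.
  case: eqP => [/(dist0 econn) ->|_]; by rewrite ?eirr ?andbF.
- move=> d /Hreal [x [y Hd]]; rewrite (Hdeg y).
  have := H x y; rewrite Hd; case=> <- <- <-.
  rewrite (card_split (e y) (fun z => (dist e x z).+1 == d)) -addnA.
  congr (_ + _)%N.
  rewrite (card_split (fun z => e y z && ~~ ((dist e x z).+1 == d)) (fun z => dist e x z == d)).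
  congr (_ + _)%N; apply: eq_card => z; rewrite !inE /=;
    case Eyz: (e y z) => //=.
    have h1 := dist_adj econn x Eyz; rewrite Hd in h1.
    have h2 := dist_adj econn x (etrans (esym z y) Eyz); rewrite Hd in h2.
    lia.
  have h1 := dist_adj econn x Eyz; rewrite Hd in h1.
  have h2 := dist_adj econn x (etrans (esym z y) Eyz); rewrite Hd in h2.
  lia.
- move=> d /andP[Hd0 /Hreal [x [y Hd]]].
  case: d Hd0 Hd => // d _ Hd.
  case: (dist_down esym econn Hd) => w [Hyw Hw].
  have := H x y; rewrite Hd; case=> <- _ _.
  by apply/card_gt0P; exists w; rewrite !inE Hyw Hw /=.
- move=> d /Hreal [x [y Hd]].
  case: (dist_down esym econn Hd) => w [Hyw Hw].
  have := H x w; rewrite Hw; case=> _ _ <-.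
  by apply/card_gt0P; exists y; rewrite !inE Hd eqxx esym Hyw.
Qed.

Lemma drg_apos (T : finType) (e : rel T) D a b c : is_drg e D a b c ->
  a 1%N <> 0%N -> forall d, (0 < d < D)%N -> (0 < a d)%N.
Proof.
case=> esym eirr econn [Hle [x0 [y0 HD]]] H Ha1 d /andP[Hd0 HdD].
have Hreal : forall d, (d <= D)%N -> exists x y, dist e x y = d.
  move=> d' Hd; have : dist e x0 y0 = (d' + (D - d'))%N by rewrite HD subnKC.
  by case/(geo esym econn) => w [Hw _]; exists x0, w.
have [z [v Hzv]] := Hreal d.+1 HdD.
case: (dist_down esym econn Hzv) => x [Hvx Hzx].
case: d Hd0 HdD Hzv Hzx => // i _ HiD Hzv Hzx.
have : dist e z x = (1 + i)%N by rewrite Hzx add1n.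
case/(geo esym econn) => x1 [Hzx1 Hx1].
have Hzx1e : e z x1.
  case: (dist_down esym econn Hzx1) => u [Hx1u Hu].
  by have := dist0 econn Hu => Ez; rewrite Ez in Hx1u; rewrite esym.
have Hxv' : e x v by rewrite esym.
have Hxv : dist e x v = 1%N.
  apply/eqP; rewrite eqn_leq (@dist_le _ _ x v 1 (ball_step (n:=0) _ Hxv')) ?inE //=.
  rewrite lt0n; apply/eqP => /(dist0 econn) Ev.
  by rewrite Ev Hzx in Hzv; lia.
have : (0 < a 1%N)%N by lia.
have := H x v; rewrite Hxv; case=> _ <- _ => /card_gt0P [w].
rewrite !inE => /andP[Hvw /eqP Hxw].
have Hxwe : e x w.
  case: (dist_down esym econn Hxw) => u [Hwu Hu].
  by have := dist0 econn Hu => Ex; rewrite Ex in Hwu; rewrite esym.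
have Hx1v : (dist e x1 v <= i.+1)%N := dist_le (ball_step Hx1 Hxv').
have Hx1w : (dist e x1 w <= i.+1)%N := dist_le (ball_step Hx1 Hxwe).
have T1 := dist_tri econn z x1 v.
have T2 := dist_tri econn z x1 w.
have A1 := dist_adj econn z (etrans (esym w v) Hvw).
have A2 := dist_adj econn z Hxwe.
have Hz1 : (dist e z x1 <= 1)%N by rewrite Hzx1.
case: (eqVneq (dist e x1 w) i.+1) => Hw.
  have Hv : dist e x1 v = i.+1 by lia.
  have := H x1 v; rewrite Hv; case=> _ <- _; apply/card_gt0P; exists w.
  by rewrite !inE Hvw /=; apply/eqP; lia.
have := H z x; rewrite Hzx; case=> _ <- _; apply/card_gt0P; exists w.
by rewrite !inE Hxwe /=; apply/eqP; lia.
Qed.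
Local Open Scope ring_scope.

Lemma nozero (R : realFieldType) D (a b c : nat -> nat) (th : R) (f : nat -> R) :
  pseudo_cosine D a b c th f -> (forall d, (0 < d <= D)%N -> (0 < c d)%N) ->
  forall j, (j < D)%N -> f j = 0 -> f j.+1 = 0 -> False.
Proof.
move=> [f0 Hf] Hc; elim=> [|j IH] Hj H0 H1.
  by move: H0; rewrite f0 => /eqP; rewrite oner_eq0.
have := Hf j.+1 Hj; rewrite H0 H1 /= !mulr0 !addr0 => /eqP.
rewrite mulf_eq0 pnatr_eq0 => /orP[/eqP|/eqP Hfj].
  have := Hc j.+1; rewrite ltn0Sn /= (ltnW Hj) => /(_ isT); lia.
exact: IH (ltnW Hj) Hfj H0.
Qed.

Lemma eps_not1 (R : realFieldType) D (a b c : nat -> nat) (th th' : R) (f g : nat -> R) :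
  (3 <= D)%N -> c 0%N = 0%N -> a 0%N = 0%N ->
  (forall d, (d <= D)%N -> (c d + a d + b d)%N = b 0%N) ->
  (0 < c 1%N)%N -> (0 < c 2%N)%N -> (0 < b 1%N)%N -> (0 < a 1%N)%N ->
  pseudo_cosine D a b c th f -> pseudo_cosine D a b c th' g ->
  f 1%N != 1 ->
  (forall j, (1 <= j <= D)%N -> (f j - f j.-1) * (g j + g j.-1) = 0) -> False.
Proof.
move=> D3 c0 a0 Hs c1p c2p b1p a1p [f0 Hf] [g0 Hg] f1n E.
have F0 := Hf 0%N ltac:(lia).
have F1 := Hf 1%N ltac:(lia).
have F2 := Hf 2%N ltac:(lia).
have G0 := Hg 0%N ltac:(lia).
have G1 := Hg 1%N ltac:(lia).
have G2 := Hg 2%N ltac:(lia).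
have E1 := E 1%N ltac:(lia).
have E2 := E 2%N ltac:(lia).
have E3 := E 3%N ltac:(lia).
have S1 := Hs 1%N ltac:(lia).
have S2 := Hs 2%N ltac:(lia).
have K2 : (c 1%N)%:R + (a 1%N)%:R + (b 1%N)%:R = (c 2%N)%:R + (a 2%N)%:R + (b 2%N)%:R :> R.
  by rewrite -!natrD S1 S2.
move: F0 F1 F2 G0 G1 G2 E1 E2 E3; rewrite /= c0 a0 f0 g0 -S1 !natrD !mul0r !add0r !mulr1.
move: K2.
set C1 := (c 1%N)%:R; set A1 := (a 1%N)%:R; set B1 := (b 1%N)%:R.
set C2 := (c 2%N)%:R; set A2 := (a 2%N)%:R; set B2 := (b 2%N)%:R.
move=> K2 F0 F1 F2 G0 G1 G2 E1 E2 E3.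
have hC1 : 0 < C1 by rewrite ltr0n. have hC2 : 0 < C2 by rewrite ltr0n.
have hB1 : 0 < B1 by rewrite ltr0n. have hA1 : 0 < A1 by rewrite ltr0n.
have hA2 : 0 <= A2 by rewrite ler0n. have hB2 : 0 <= B2 by rewrite ler0n.
have g1 : g 1%N = -1.
  move: E1 => /eqP; rewrite mulf_eq0 subr_eq0 (negbTE f1n) /= => /eqP; lra.
rewrite -G0 g1 in G1.
have hg2 : B1 * (g 2%N - 1) = 2 * A1 by lra.
have f21 : f 2%N = f 1%N.
  move: E2 => /eqP; rewrite mulf_eq0 => /orP[/eqP|/eqP]; first lra.
  rewrite g1 => h; have : B1 * (g 2%N - 1) = 0 by rewrite (_ : g 2%N - 1 = 0); [rewrite mulr0 | lra].
  lra.
rewrite -F0 f21 in F1 F2.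
have hf1 : C1 + (C1 + A1 + B1) * f 1%N = 0.
  have : (1 - f 1%N) * (C1 + (C1 + A1 + B1) * f 1%N) = 0 by lra.
  move/eqP; rewrite mulf_eq0 => /orP[/eqP h|/eqP //].
  by move: f1n; rewrite (_ : f 1%N = 1) ?eqxx //; lra.
move: E3 => /eqP; rewrite mulf_eq0 => /orP[/eqP h|/eqP h].
  have f3 : f 3%N = f 1%N by lra.
  rewrite f3 in F2.
  have : (C1 + A1 + B1) * f 1%N * (1 - f 1%N) = 0 by rewrite K2 in F2 *; lra.
  move/eqP; rewrite !mulf_eq0 => /orP[/orP[/eqP|/eqP h1]|/eqP h1]; first lra.
    by move: hC1; rewrite h1 mulr0 addr0 in hf1; rewrite hf1 ltxx.
  by move: f1n; rewrite (_ : f 1%N = 1) ?eqxx //; lra.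
have g3 : g 3%N = - g 2%N by lra.
rewrite g3 -G0 g1 in G2.
have hc2 : C2 = g 2%N * (C2 + 2 * A2) by rewrite K2 in G2; lra.
have : B1 * C2 = (B1 + 2 * A1) * (C2 + 2 * A2).
  rewrite {1}hc2 mulrA (_ : B1 * g 2%N = B1 + 2 * A1) //; lra.
have : 0 < A1 * C2 by apply: mulr_gt0.
have : 0 <= B1 * A2 by apply: mulr_ge0; lra.
have : 0 <= A1 * A2 by apply: mulr_ge0; lra.
lra.
Qed.
Unset Implicit Arguments.

Theorem lemma11p1 (R : realFieldType) (T : finType) (e : rel T) (D : nat)
  (a b c : nat -> nat) (sigma rho : nat -> R) (eps : R) :
  is_drg e D a b c -> (3 <= D)%N -> a 1%N <> 0%N ->
  nontrivial_pcs D a b c sigma -> nontrivial_pcs D a b c rho ->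
  tight_pair D a b c sigma rho ->
  auxiliary_parameter D sigma rho eps ->
  forall i : nat, (1 <= i <= D - 1)%N ->
  [<-> sigma i.-1 = eps * sigma i;
       sigma i.+1 = eps * sigma i;
       sigma i.-1 = sigma i.+1;
       rho i = 0].
Proof.
move=> Hdrg HD3 Ha1 [[th Hspc] Hs1] [[th' Hrpc] Hr1] _ Haux i /andP[Hi1 HiD].
have [c0 a0 Hsum Hc Hb] := drg_facts Hdrg.
have Ha := drg_apos Hdrg Ha1.
have c1p : (0 < c 1%N)%N by apply: Hc; lia.
have c2p : (0 < c 2%N)%N by apply: Hc; lia.
have b1p : (0 < b 1%N)%N by apply: Hb; lia.
have a1p : (0 < a 1%N)%N by lia.
have ep1 : eps != 1.
  apply/eqP => ep; apply: (eps_not1 HD3 c0 a0 Hsum c1p c2p b1p a1p Hspc Hrpc Hs1).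
  move=> j Hj; have := Haux j Hj; rewrite ep; lra.
have ep2 : eps != -1.
  apply/eqP => ep; apply: (eps_not1 HD3 c0 a0 Hsum c1p c2p b1p a1p Hrpc Hspc Hr1).
  move=> j Hj; have := Haux j Hj; rewrite ep; lra.
have epq : 1 - eps * eps != 0.
  apply/eqP => h; have : (1 - eps) * (1 + eps) = 0 by lra.
  move/eqP; rewrite mulf_eq0 => /orP[/eqP h1|/eqP h1].
    by move/eqP: ep1; apply; lra.
  by move/eqP: ep2; apply; lra.
case: i Hi1 HiD => [|i'] // _ HiD.
have HiD' : (i'.+1 < D)%N by lia.
have Ei := Haux i'.+1 ltac:(lia).
have Ei1 := Haux i'.+2 ltac:(lia).
have nzs1 := nozero Hspc Hc (ltnW HiD').
have nzs2 := nozero Hspc Hc HiD'.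
have nzr1 := nozero Hrpc Hc (ltnW HiD').
have nzr2 := nozero Hrpc Hc HiD'.
rewrite /= in Ei Ei1 *.
set u := sigma i' in Ei Ei1 nzs1 nzs2 *.
set v := sigma i'.+1 in Ei Ei1 nzs1 nzs2 *.
set x := sigma i'.+2 in Ei Ei1 nzs1 nzs2 *.
set w := rho i' in Ei Ei1 nzr1 nzr2 *.
set r := rho i'.+1 in Ei Ei1 nzr1 nzr2 *.
set y := rho i'.+2 in Ei Ei1 nzr1 nzr2 *.
have iv_i : r = 0 -> u = eps * v.
  move=> h; have hw : w != 0 by apply/eqP => h'; exact: nzr1 h' h.
  have : w * (u - eps * v) = 0 by rewrite h in Ei; lra.
  move/eqP; rewrite mulf_eq0 (negbTE hw) /= => /eqP; lra.
have iv_ii : r = 0 -> x = eps * v.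
  move=> h; have hy : y != 0 by apply/eqP => h'; exact: nzr2 h h'.
  have : y * (x - eps * v) = 0 by rewrite h in Ei1; lra.
  move/eqP; rewrite mulf_eq0 (negbTE hy) /= => /eqP; lra.
have i_iv : u = eps * v -> r = 0.
  move=> h; have hv : v != 0.
    by apply/eqP => h'; apply: nzs1 => //; rewrite h h' mulr0.
  have : v * r * (1 - eps * eps) = 0 by rewrite h in Ei; clear -Ei; lra.
  move/eqP; rewrite !mulf_eq0 (negbTE hv) (negbTE epq) /= orbF; exact/eqP.
have ii_iv : x = eps * v -> r = 0.
  move=> h; have hv : v != 0.
    by apply/eqP => h'; apply: nzs2 => //; rewrite h h' mulr0.
  have : v * r * (1 - eps * eps) = 0 by rewrite h in Ei1; clear -Ei1; lra.
  move/eqP; rewrite !mulf_eq0 (negbTE hv) (negbTE epq) /= orbF; exact/eqP.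
have iii_iv : u = x -> r = 0.
  move=> hux; apply/eqP; apply: contraT => hr.
  case: (eqVneq (u - eps * v) 0) => hq.
    by move: hr; rewrite i_iv ?eqxx //; apply/eqP; rewrite -subr_eq0 hq.
  have hwy : w = y.
    have : (w - y) * (u - eps * v) = 0 by rewrite -hux in Ei1; clear -Ei Ei1; lra.
    by move/eqP; rewrite mulf_eq0 (negbTE hq) orbF => /eqP/subr0_eq.
  have [s0 Hs] := Hspc.
  have [r0 Hr] := Hrpc.
  have Hs0 := Hs 0%N ltac:(lia).
  have Hr0 := Hr 0%N ltac:(lia).
  have Hsi := Hs i'.+1 HiD'.
  have Hri := Hr i'.+1 HiD'.
  have E1 := Haux 1%N ltac:(lia).
  have Ks := Hsum i'.+1 (ltnW HiD').
  have Ai := Ha i'.+1 ltac:(lia).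
  rewrite /= c0 a0 s0 in Hs0; rewrite /= c0 a0 r0 in Hr0. rewrite !mul0r !add0r !mulr1 in Hs0 Hr0.
  rewrite /= s0 r0 in E1.
  rewrite /= -/u -/v -/x -hux -Hs0 -Ks !natrD in Hsi.
  rewrite /= -/w -/r -/y -hwy -Hr0 -Ks !natrD in Hri.
  move: Hsi Hri E1 Ai Ei hr hq.
  set C := (c i'.+1)%:R; set A := (a i'.+1)%:R; set B := (b i'.+1)%:R.
  set s1 := sigma 1%N; set r1 := rho 1%N.
  move=> Hsi Hri E1 Ai Ei hr hq.
  have hP : C*u + A*v + B*u - (C+A+B)*s1*v = 0 by clear -Hsi; lra.
  have hQ : C*w + A*r + B*w - (C+A+B)*r1*r = 0 by clear -Hri; lra.
  have hE : w*(u - eps*v) - r*(v - eps*u) = 0 by clear -Ei; lra.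
  have hE1 : s1*r1 - 1 - eps*(r1 - s1) = 0 by clear -E1; lra.
  have key : r*v*(C+A+B)*A*(s1-1)*(r1-1) = 0.
    rewrite (_ : r*v*(C+A+B)*A*(s1-1)*(r1-1) =
      (C+B)^+2 * (w*(u - eps*v) - r*(v - eps*u))
      - ((C*w + A*r + B*w - (C+A+B)*r1*r) * (C*u + A*v + B*u - (C+A+B)*s1*v)
         + (C*w + A*r + B*w - (C+A+B)*r1*r) * v * ((C+B) + (C+A+B)*(s1-1))
         + r * ((C+B) + (C+A+B)*(r1-1)) * (C*u + A*v + B*u - (C+A+B)*s1*v)
         - eps * (C+B) * v * (C*w + A*r + B*w - (C+A+B)*r1*r)
         + eps * (C+B) * r * (C*u + A*v + B*u - (C+A+B)*s1*v))
      - r*v*(C+A+B)*(C+B)*(s1*r1 - 1 - eps*(r1 - s1))); last by ring.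
    by rewrite hP hQ hE hE1; ring.
  have hC : 0 < C by rewrite ltr0n; apply: Hc; lia.
  have hB : 0 <= B by rewrite ler0n.
  have hA : 0 < A by rewrite ltr0n.
  have hv : v != 0.
    apply/eqP => hv0.
    have : (C + B) * u = 0 by rewrite hv0 in hP; clear -hP; lra.
    move/eqP; rewrite mulf_eq0 => /orP[/eqP|/eqP hu0].
      by move=> h0; move: hC hB; rewrite -/C; clear -h0; lra.
    by move: hq; rewrite hu0 hv0 mulr0 subrr eqxx.
  have hK : C + A + B != 0 by apply/eqP => h0; move: hC hB hA; clear -h0; lra.
  have hA0 : A != 0 by apply/eqP => h0; move: hA; clear -h0; lra.
  have hs1 : s1 - 1 != 0 by rewrite subr_eq0.
  have hr1 : r1 - 1 != 0 by rewrite subr_eq0.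
  move/eqP: key; rewrite !mulf_eq0 (negbTE hr) (negbTE hv) (negbTE hK) (negbTE hA0).
  by rewrite (negbTE hs1) (negbTE hr1).
tfae => [h|h|h|h].
- exact: iv_ii (i_iv h).
- by rewrite (iv_i (ii_iv h)) (iv_ii (ii_iv h)).
- exact: iii_iv h.
- exact: iv_i h.
Qed.
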